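(* In the Ewens setting: - $W(N,0)=(N-1)!\,\theta$ for all $N\ge1$; - for all $N\ge2$ and $1\le k\le N-1$, $$W(N,k)=\theta\,[k]_\theta\,\frac{(N-1)!}{(k-1)!}\sum_{i=k}^{N-1}\frac1i.$$
   Context: Permutations of $\{1,\dots,N\}$ are written in one-line notation; $\mathfrak S_N$ is the set of all of them. An entry $\pi_j$ is a left-to-right maximum if $\pi_j>\pi_i$ for all $i<j$; $\mathrm{lrm}(\pi)$ is the number of left-to-right maxima. For $0\le k\le N-1$, a permutation $\pi\in\mathfrak S_N$ is $k$-winnable if the first index $j>k$ such that $\pi_j$ is a left-to-right maximum satisfies $\pi_j=N$. Ewens setting: $W(N,k)=\sum_{k\text{-winnable }\pi\in\mathfrak S_N}\theta^{\mathrm{lrm}(\pi)}$ and $[m]_\theta=\theta(\theta+1)\cdots(\theta+m-1)$, with $[0]_\theta=1$. *)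

(* Defs.v *)
(* Permutations of {1..N} are modelled as 'S_N = {perm 'I_N},
   i.e. 0-based positions and 0-based values (value v <-> v+1, position j <-> j+1). *)
From HB Require Import structures.
From mathcomp Require Import all_boot all_order all_algebra all_fingroup.
Set Implicit Arguments. Unset Strict Implicit. Unset Printing Implicit Defensive.
Import Order.TTheory GRing.Theory Num.Theory.
Local Open Scope ring_scope.

Definition is_lrm (N : nat) (s : 'S_N) (j : 'I_N) : bool :=
  [forall i : 'I_N, (i < j)%N ==> (s i < s j)%N].

Definition lrm (N : nat) (s : 'S_N) : nat := #|[set j : 'I_N | is_lrm s j]|.

(* k-winnable: the first (1-based) index j > k, i.e. 0-based index j >= k, at which
   s has a left-to-right maximum exists and carries the maximal value N
   (0-based value N.-1). *)
Definition winnable (N k : nat) (s : 'S_N) : bool :=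
  [exists j : 'I_N,
    [&& (k <= j)%N, is_lrm s j,
        [forall i : 'I_N, ((k <= i) && (i < j))%N ==> ~~ is_lrm s i]
      & (val (s j) == N.-1)%N]].

Definition W (R : numFieldType) (theta : R) (N k : nat) : R :=
  \sum_(s : 'S_N | winnable k s) theta ^+ lrm s.

Definition rising (R : numFieldType) (theta : R) (m : nat) : R :=
  \prod_(i < m) (theta + i%:R).

(* Main.v *)
Require Import Defs.
From HB Require Import structures.
From mathcomp Require Import all_boot all_order all_algebra all_fingroup.
From mathcomp Require Import zify ring.
Import Order.TTheory GRing.Theory Num.Theory.
Local Open Scope ring_scope.


Lemma ltn_bump2 h i j : (bump h i < bump h j)%N = (i < j)%N.
Proof.
rewrite !ltn_neqAle leq_bump2; congr (_ && _).
by rewrite (inj_eq (can_inj (bumpK h))).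
Qed.

Lemma big_perm_lift (R : numFieldType) n (F : 'S_n.+1 -> R) :
  \sum_(s : 'S_n.+1) F s =
  \sum_(v : 'I_n.+1) \sum_(t : 'S_n) F (lift_perm ord_max v t).
Proof.
rewrite (partition_big (fun s : 'S_n.+1 => s ord_max) xpredT) //=.
apply: eq_bigr => j0 _.
set i0 : 'I_n.+1 := ord_max.
rewrite (reindex (lift_perm i0 j0)); last first.
  pose ulsf i (s : 'S_n.+1) k := odflt k (unlift (s i) (s (lift i k))).
  have ulsfK i (s : 'S_n.+1) k: lift (s i) (ulsf i s k) = s (lift i k).
    rewrite /ulsf; have:= neq_lift i k.
    by rewrite -(can_eq (permK s)) => /unlift_some[] ? ? ->.
  have inj_ulsf: injective (ulsf i0 _).
    move=> s; apply: can_inj (ulsf (s i0) s^-1%g) _ => k'.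
    by rewrite {1}/ulsf ulsfK !permK liftK.
  exists (fun s => perm (inj_ulsf s)) => [s _ | s].
    by apply/permP=> k'; rewrite permE /ulsf lift_perm_lift lift_perm_id liftK.
  move/(s _ =P _) => si0; apply/permP=> k.
  case: (unliftP i0 k) => [k'|] ->; rewrite ?lift_perm_id //.
  by rewrite lift_perm_lift -si0 permE ulsfK.
by apply: eq_bigl => t; rewrite lift_perm_id eqxx.
Qed.

Definition nolrm {N} k (s : 'S_N) := [forall i : 'I_N, (k <= i)%N ==> ~~ is_lrm s i].

Lemma bump_eq_n (v x n : nat) : (v < n)%N -> (x < n)%N -> (bump v x == n) = (x == n.-1).
Proof. rewrite /bump; case: leqP => h /= hv hx; apply/eqP/eqP; lia. Qed.

Section L.
Variables (n : nat) (v : 'I_n.+1) (t : 'S_n).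
Local Notation s := (lift_perm ord_max v t).

Lemma bump_max m (i : 'I_m) : bump m i = i.
Proof. by rewrite /bump leqNgt ltn_ord. Qed.

Lemma lrm_lift i : is_lrm s (lift ord_max i) = is_lrm t i.
Proof.
apply/forallP/forallP => H i'.
  move: (H (lift ord_max i')); rewrite !lift_perm_lift /= !bump_max.
  by rewrite ltn_bump2.
case: (unliftP ord_max i') => [j|] -> /=.
  rewrite !lift_perm_lift /= !bump_max ltn_bump2; exact: H.
by apply/implyP; rewrite /= bump_max ltnNge (ltnW (ltn_ord i)).
Qed.

Lemma lrm_max : is_lrm s ord_max = (v == ord_max).
Proof.
apply/forallP/idP => [H | /eqP Hv].
  apply/eqP/val_inj => /=; apply/eqP; rewrite eqn_leq -ltnS ltn_ord /=.
  have [i Hi] : exists i, s i = ord_max by exists (s^-1 ord_max)%g; rewrite permKV.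
  case: (unliftP ord_max i) Hi => [j|] ->; last first.
    by rewrite lift_perm_id => ->.
  move=> Hj; move: (H (lift ord_max j)); rewrite Hj lift_perm_id lift_max /= ltn_ord /=.
  by rewrite ltnNge leq_ord.
move=> i; apply/implyP => Hi; rewrite lift_perm_id /=.
have := ltn_ord (s i); rewrite ltnS leq_eqVlt => /orP[/eqP E|]; last by rewrite Hv.
have : s i = s ord_max by apply: val_inj => /=; rewrite E lift_perm_id Hv.
by move/perm_inj => Ei; move: Hi; rewrite Ei ltnn.
Qed.

Lemma lrm_liftS : lrm s = (lrm t + (v == ord_max))%N.
Proof.
rewrite /lrm -!sum1_card !(big_mkcond (fun j => j \in _)) big_ord_recr /=.
rewrite inE lrm_max; congr (_ + _)%N.
apply: eq_bigr => i _; rewrite !inE.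
have -> : widen_ord (leqnSn n) i = lift ord_max i by apply: val_inj; rewrite /= bump_max.
by rewrite lrm_lift.
Qed.

Lemma nolrm_lift k : (k <= n)%N -> nolrm k s = (v != ord_max) && nolrm k t.
Proof.
move=> hk; apply/forallP/andP => [H | [Hv Ht] i].
  split; first by move: (H ord_max); rewrite lrm_max /= hk.
  by apply/forallP => i; move: (H (lift ord_max i)); rewrite lrm_lift /= bump_max.
case: (unliftP ord_max i) => [j|] ->.
  by rewrite lrm_lift /= bump_max; exact: (forallP Ht j).
by rewrite lrm_max; apply/implyP.
Qed.

Lemma win_lift k : (k <= n)%N ->
  winnable k s = if v == ord_max then nolrm k t else winnable k t.
Proof.
move=> hk; case: eqP => Hv.
  apply/existsP/idP => [[j /and4P[Hkj Hlj Hf Hval]] | Ht].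
    have Ej : j = ord_max.
      apply: (@perm_inj _ s); apply: val_inj; rewrite /= (eqP Hval) lift_perm_id Hv //.
    subst j; apply/forallP => i; apply/implyP => hki.
    move: (forallP Hf (lift ord_max i)); rewrite lrm_lift /= bump_max hki ltn_ord.
    by [].
  exists ord_max; apply/and4P; split => //.
  - by rewrite lrm_max Hv.
  - apply/forallP => i; apply/implyP => /andP[hki hi].
    case: (unliftP ord_max i) hki hi => [j|] ->; last by rewrite ltnn.
    by rewrite lrm_lift /= bump_max => hkj _; exact: (implyP (forallP Ht j) hkj).
  - by rewrite lift_perm_id Hv.
have hvn : (v < n)%N.
  by have := ltn_ord v; rewrite ltnS leq_eqVlt => /orP[/eqP E|//]; case: Hv; apply: val_inj.
apply/existsP/existsP => [[j /and4P[Hkj Hlj Hf Hval]] | [j /and4P[Hkj Hlj Hf Hval]]].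
  case: (unliftP ord_max j) Hkj Hlj Hf Hval => [j'|] ->; last first.
    by rewrite lrm_max; move/eqP: Hv => /negbTE ->.
  rewrite lrm_lift /= bump_max => Hkj Hlj Hf Hval.
  exists j'; apply/and4P; split => //.
    apply/forallP => i; apply/implyP => hi.
    by move: (implyP (forallP Hf (lift ord_max i))); rewrite lrm_lift /= !bump_max; apply.
  by move: Hval; rewrite lift_perm_lift /= bump_eq_n.
exists (lift ord_max j); apply/and4P; split.
- by rewrite /= bump_max.
- by rewrite lrm_lift.
- apply/forallP => i; apply/implyP => /andP[hki hi].
  case: (unliftP ord_max i) hki hi => [i'|] ->; last first.
    by rewrite /= bump_max => _; rewrite ltnNge (ltnW (ltn_ord j)).
  rewrite lrm_lift /= !bump_max => hki hi.
  by apply: (implyP (forallP Hf i')); rewrite hki hi.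
- by rewrite lift_perm_lift /= bump_eq_n.
Qed.
End L.

Section S.
Variables (R : numFieldType) (theta : R).
Definition AA N := \sum_(s : 'S_N) theta ^+ lrm s.
Definition LL N k := \sum_(s : 'S_N | nolrm k s) theta ^+ lrm s.

Lemma split_sum n (P : 'S_n.+1 -> bool) :
  \sum_(s | P s) theta ^+ lrm s =
  \sum_(v < n) \sum_(t : 'S_n | P (lift_perm ord_max (widen_ord (leqnSn n) v) t)) theta ^+ lrm t
  + \sum_(t : 'S_n | P (lift_perm ord_max ord_max t)) theta ^+ (lrm t).+1.
Proof.
rewrite big_mkcond big_perm_lift big_ord_recr /=; congr (_ + _).
  apply: eq_bigr => v _; rewrite [RHS]big_mkcond; apply: eq_bigr => t _.
  rewrite lrm_liftS.
  have -> : (widen_ord (leqnSn n) v == ord_max) = false.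
    by apply/negbTE; rewrite neq_ltn /= ltn_ord.
  by rewrite addn0.
rewrite [RHS]big_mkcond; apply: eq_bigr => t _.
by rewrite lrm_liftS eqxx addn1.
Qed.

Lemma widen_neq n (v : 'I_n) : (widen_ord (leqnSn n) v == ord_max) = false.
Proof. by apply/negbTE; rewrite neq_ltn /= ltn_ord. Qed.

Lemma AA_rec n : AA n.+1 = (theta + n%:R) * AA n.
Proof.
rewrite /AA split_sum.
under eq_bigr do rewrite big_mkcond /=.
under eq_bigr do under eq_bigr do rewrite /=.
rewrite sumr_const card_ord.
under [X in _ + X]eq_bigr do rewrite exprS.
by rewrite -mulr_sumr mulrDl addrC mulr_natl.
Qed.

Lemma LL_rec n k : (k <= n)%N -> LL n.+1 k = n%:R * LL n k.
Proof.
move=> hk; rewrite /LL split_sum.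
rewrite [X in _ + X]big1 ?addr0; last by move=> t; rewrite nolrm_lift // eqxx.
under eq_bigr => v _ do (under eq_bigl => t do rewrite nolrm_lift // widen_neq /=).
by rewrite sumr_const card_ord mulr_natl.
Qed.

Lemma W_rec n k : (k <= n)%N -> W theta n.+1 k = n%:R * W theta n k + theta * LL n k.
Proof.
move=> hk; rewrite /W /LL split_sum.
under eq_bigr => v _ do (under eq_bigl => t do rewrite win_lift // widen_neq /=).
rewrite sumr_const card_ord mulr_natl; congr (_ + _).
under eq_bigl => t do rewrite win_lift // eqxx.
by rewrite mulr_sumr; apply: eq_bigr => t _; rewrite exprS.
Qed.
End S.

Arguments AA {R}. Arguments LL {R}.
Section S.
Variables (R : numFieldType) (theta : R).

Lemma lrm0 (s : 'S_0) : lrm s = 0%N.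
Proof. by apply/eqP; rewrite cards_eq0; apply/eqP/setP => -[]. Qed.

Lemma AA0 : AA theta 0 = 1.
Proof. by rewrite /AA; under eq_bigr do rewrite lrm0 expr0; rewrite sumr_const card_Sn. Qed.

Lemma LLkk k : LL theta k k = AA theta k.
Proof.
apply: eq_bigl => s; apply/forallP => i; apply/implyP => hi.
by move: (leq_trans (ltn_ord i) hi); rewrite ltnn.
Qed.

Lemma Wkk k : W theta k k = 0.
Proof.
apply: big_pred0 => s; apply/existsP => -[j /and4P[hj _ _ _]].
by move: (leq_trans (ltn_ord j) hj); rewrite ltnn.
Qed.

Lemma AA_rising n : AA theta n = rising theta n.
Proof.
elim: n => [|n IH]; first by rewrite AA0 /rising big_ord0.
by rewrite AA_rec IH /rising big_ord_recr /= mulrC.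
Qed.

Lemma LL_closed m d :
  LL theta (m.+1 + d) m.+1 * m`!%:R = AA theta m.+1 * (m + d)`!%:R.
Proof.
elim: d => [|d IH]; first by rewrite !addn0 LLkk.
rewrite addnS LL_rec ?leq_addr // -mulrA IH addnS factS natrM.
rewrite addSn; ring.
Qed.

Lemma W_closed m d :
  W theta (m.+1 + d) m.+1 * m`!%:R =
  theta * AA theta m.+1 * (m + d)`!%:R * \sum_(m.+1 <= i < m.+1 + d) (i%:R)^-1.
Proof.
elim: d => [|d IH]; first by rewrite !addn0 Wkk big_geq // !mul0r mulr0.
rewrite addnS W_rec ?leq_addr // mulrDl -mulrA IH -[theta * LL _ _ _ * _]mulrA LL_closed.
rewrite [in RHS]big_nat_recr ?leq_addr // addnS factS natrM addSn.
have h : (m + d).+1%:R != 0 :> R by rewrite pnatr_eq0.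
set x := (m + d).+1%:R in h *.
set S := \big[_/_]_(_ <= _ < _) _. rewrite /=. clearbody S x. move: (AA theta m.+1) ((m + d)`!%:R) => a f. field. exact: h.
Qed.

Lemma W0 n : W theta n.+1 0 = n`!%:R * theta.
Proof.
elim: n => [|n IH].
  by rewrite W_rec // LLkk AA0 mul0r add0r mulr1 mul1r.
rewrite W_rec // IH factS natrM.
have -> : LL theta n.+1 0 = 0.
  elim: n {IH} => [|n IHn]; first by rewrite LL_rec // LLkk AA0 mul0r.
  by rewrite LL_rec // IHn mulr0.
by rewrite mulr0 addr0 mulrA.
Qed.
End S.

Theorem theorem5p1 (R : numFieldType) (theta : R) :
  (forall N : nat, (1 <= N)%N -> W theta N 0 = (N.-1)`!%:R * theta) /\
  (forall N k : nat, (2 <= N)%N -> (1 <= k)%N -> (k <= N.-1)%N ->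
     W theta N k =
       theta * rising theta k * ((N.-1)`!%:R / (k.-1)`!%:R) *
       \sum_(k <= i < N) (i%:R)^-1).
Proof.
split.
  by case=> [|n] // _; rewrite W0.
move=> N k hN; case: k => [|m] // _ hkN.
have HN : N = (m.+1 + (N - m.+1))%N.
  by rewrite subnKC //; apply: leq_trans hkN (leq_pred N).
rewrite HN; move: (N - m.+1)%N => d.
have hm : m`!%:R != 0 :> R by rewrite pnatr_eq0 -lt0n fact_gt0.
apply: (mulIf hm); rewrite W_closed AA_rising addSn /=.
set S := \sum_(_ <= _ < _) _. clearbody S.
move: (rising theta m.+1) ((m + d)`!%:R) => a f.
set y := m`!%:R in hm *; clearbody y.
field; exact: hm.
Qed.
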